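(* Let $\mathbf x_i$ denote $\mathbf m^t_i+\widehat{\nabla}_{\boldsymbol{\theta}} f_{\mathcal{B}_i}(\boldsymbol{\theta})$ for $i=1,\ldots,n$, and suppose $\mathbb{E}\|\mathrm{CLT}^k_i(\mathbf x_j)-\mathbf x_j\|^2\le\gamma_j\,\mathbb{E}\|\mathbf x_j\|^2$ for all $\mathbf x_i,\mathbf x_j$. Assume that gradients at different workers are positively correlated, i.e., there exists a positive constant $\kappa$ such that $\mathbb{E}[\mathbf x^T_i\mathbf x_j]\ge\kappa \|\mathbf x_i\|\|\mathbf x_j\|$ for all $i,j$, and that $\mathbb{E}\|\mathbf x_i\|^2=\mathbb{E}\|\mathbf x_j\|^2$ for all $i,j$. Then, if $\kappa>\big(n\sum^n_{i=1}\gamma_i-1\big)/\big(n(n-1)\big)$, we have $\gamma=\frac{ n\sum^n_{i=1}\gamma_i}{1+\kappa n(n-1)}<1$ such that $\mathbb{E}\|\mathbf y-\mathrm{CLT}^k_i(\mathbf y)\|^2\le\gamma\,\mathbb{E}\|\mathbf y\|^2$, where $\mathbf y=\frac{1}{n}\sum^n_{i=1}\mathbf x_i$.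
   Context: Distributed training with $n\ge 2$ workers minimizes $f(\boldsymbol{\theta})=\frac{1}{n}\sum_{i=1}^n f_i(\boldsymbol{\theta})$, $f_i(\boldsymbol{\theta})=\mathbb{E}_{\xi_i\sim\mathcal{D}}F(\boldsymbol{\theta},\xi_i)$ with identical data distribution $\mathcal{D}$ at all workers. Worker $i$ uses a mini-batch $\mathcal{B}_i$ and stochastic gradient estimate $\widehat{\nabla}_{\boldsymbol{\theta}} f_{\mathcal{B}_i}(\boldsymbol{\theta})=|\mathcal{B}_i|^{-1}\sum_{j\in\mathcal{B}_i}\nabla_{\boldsymbol{\theta}} f_{i,j}(\boldsymbol{\theta})$, and keeps a local memory (gradient residue / error feedback) $\mathbf m^t_i$ at iteration $t$. For a vector $\mathbf x$, $\mathcal{I}^k(\mathbf x)$ denotes the index set of its $k$ largest entries in magnitude. The cyclic local top-$k$ compressor with worker $i$ as leader, $\mathrm{CLT}^k_i:\mathbb{R}^p\to\mathbb{R}^p$, is defined entrywise by $[\mathrm{CLT}^k_i(\mathbf x_j)]_m=(\mathbf x_j)_m$ if $m\in\mathcal{I}^k(\mathbf x_i)$ and $0$ otherwise, i.e., every worker's vector is sparsified using the top-$k$ indices of the leader's vector $\mathbf x_i$; it is linear in its argument for a fixed leader index set (so $\mathrm{CLT}^k_i(\frac1n\sum_j\mathbf x_j)=\frac1n\sum_j\mathrm{CLT}^k_i(\mathbf x_j)$). *)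

(* Defs.v *)
From HB Require Import structures.
From mathcomp Require Import all_boot all_order all_algebra.
From mathcomp Require Import all_classical all_reals all_analysis.
Set Implicit Arguments. Unset Strict Implicit. Unset Printing Implicit Defensive.
Import Order.TTheory GRing.Theory Num.Theory.
Local Open Scope ring_scope.

Section Defs.
Variable R : realType.
Variable p : nat.

Definition beats (v : 'rV[R]_p) (j i : 'I_p) : bool :=
  (`|v 0 i| < `|v 0 j|) || ((`|v 0 j| == `|v 0 i|) && (j < i)%N).

(* I^k(v): indices of the k largest entries of v in magnitude
   (exactly min(k,p) indices; ties broken by index). *)
Definition topk (k : nat) (v : 'rV[R]_p) : {set 'I_p} :=
  [set i | #|[set j | beats v j i]| < k]%N.

(* Cyclic local top-k compressor with leader vector [lead]:
   keep the entries of x on I^k(lead), zero elsewhere. *)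
Definition CLT (k : nat) (lead x : 'rV[R]_p) : 'rV[R]_p :=
  \row_m (if m \in topk k lead then x 0 m else 0).

Definition sqnorm (x : 'rV[R]_p) : R := \sum_m x 0 m ^+ 2.
Definition dotv (x y : 'rV[R]_p) : R := \sum_m x 0 m * y 0 m.
End Defs.

(* Main.v *)
Require Import Defs.
From HB Require Import structures.
From mathcomp Require Import all_boot all_order all_algebra.
From mathcomp Require Import all_classical all_reals all_analysis.
From mathcomp Require Import ring lra measurable_realfun.
Import Order.TTheory GRing.Theory Num.Theory.
Local Open Scope ring_scope.
Set Implicit Arguments. Unset Strict Implicit. Unset Printing Implicit Defensive.


Local Open Scope ring_scope.

Section Alg.
Variable R : realType.
Variable p : nat.

Lemma sqnorm_ge0 (v : 'rV[R]_p) : 0 <= sqnorm v.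
Proof. by apply: sumr_ge0 => m _; rewrite sqr_ge0. Qed.

Lemma sqnormZ c (v : 'rV[R]_p) : sqnorm (c *: v) = c ^+ 2 * sqnorm v.
Proof.
rewrite /sqnorm mulr_sumr; apply: eq_bigr => m _; rewrite mxE; by rewrite exprMn.
Qed.

Lemma sqnormN (v : 'rV[R]_p) : sqnorm (- v) = sqnorm v.
Proof. by apply: eq_bigr => m _; rewrite mxE sqrrN. Qed.

Lemma dotvv (v : 'rV[R]_p) : dotv v v = sqnorm v.
Proof. by apply: eq_bigr => m _; rewrite expr2. Qed.

Lemma sum_sq_le (n : nat) (a : 'I_n -> R) :
  (\sum_j a j) ^+ 2 <= n%:R * \sum_j a j ^+ 2.
Proof.
have H : 0 <= \sum_i \sum_j (a i - a j) ^+ 2.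
  by apply: sumr_ge0 => i _; apply: sumr_ge0 => j _; rewrite sqr_ge0.
have E : \sum_i \sum_j (a i - a j) ^+ 2
   = 2%:R * (n%:R * \sum_j a j ^+ 2) - 2%:R * (\sum_j a j) ^+ 2.
  have inner : forall i, \sum_j (a i - a j) ^+ 2
      = n%:R * a i ^+ 2 - (a i * \sum_j a j) *+ 2 + \sum_j a j ^+ 2.
    move=> i; under eq_bigr => j _ do rewrite sqrrB.
    rewrite big_split /= sumrB sumr_const card_ord mulr_sumr sumrMnl.
    by rewrite mulr_natl.
  under eq_bigr => i _ do rewrite inner.
  rewrite big_split /= sumrB sumr_const card_ord -mulr_sumr sumrMnl -mulr_suml.
  rewrite expr2; set A := \sum_(j < n) a j ^+ 2; set S := \sum_(j < n) a j.
  rewrite !mulr_natl mulr2n [(A *+ n) *+ 2]mulr2n; set B := A *+ n; set C := S * S; lra.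
move: H; rewrite E subr_ge0 => H.
by rewrite -(ler_pM2l (_ : 0 < 2%:R)) //.
Qed.

Lemma key (n : nat) (v : 'I_n -> 'rV[R]_p) : (0 < n)%N ->
  sqnorm (n%:R^-1 *: \sum_j v j) <= \sum_j n%:R^-1 * sqnorm (v j).
Proof.
move=> n0; rewrite sqnormZ -mulr_sumr.
have N0 : 0 < n%:R :> R by rewrite ltr0n.
have -> : \sum_j sqnorm (v j) = \sum_m \sum_j v j 0 m ^+ 2.
  by rewrite exchange_big.
have : sqnorm (\sum_j v j) <= n%:R * \sum_m \sum_j v j 0 m ^+ 2.
  rewrite mulr_sumr; apply: ler_sum => m _; rewrite summxE; exact: sum_sq_le.
move: (\sum_m _) (sqnorm _) (sqnorm_ge0 (\sum_j v j)) => A B B0 H.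
rewrite expr2 -mulrA ler_pdivrMl // mulrA mulfV ?gt_eqF // mul1r.
by rewrite ler_pdivrMl.
Qed.

Lemma sqnorm_sum (n : nat) (v : 'I_n -> 'rV[R]_p) :
  sqnorm (\sum_j v j) = \sum_a \sum_b dotv (v a) (v b).
Proof.
rewrite /sqnorm /dotv.
under eq_bigr => m _ do rewrite summxE expr2 mulr_suml.
rewrite exchange_big; apply: eq_bigr => a _.
under eq_bigr => m _ do rewrite mulr_sumr.
by rewrite exchange_big.
Qed.

Lemma dot_le (u v : 'rV[R]_p) : `|dotv u v| <= `|sqnorm u + sqnorm v|.
Proof.
rewrite [X in _ <= X]ger0_norm ?addr_ge0 ?sqnorm_ge0 //.
apply: le_trans (ler_norm_sum _ _ _) _.
rewrite /sqnorm -big_split /=; apply: ler_sum => m _.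
rewrite normrM.
have := sqr_ge0 (`|u 0 m| - `|v 0 m|); rewrite sqrrB !real_normK ?num_real //.
have := normr_ge0 (u 0 m); have := normr_ge0 (v 0 m); nra.
Qed.

Lemma CLT_sub_le k (l v : 'rV[R]_p) : `|sqnorm (CLT k l v - v)| <= `|sqnorm v|.
Proof.
rewrite !ger0_norm ?sqnorm_ge0 //; apply: ler_sum => m _.
rewrite !mxE; case: ifP => _; first by rewrite subrr expr2 mulr0 sqr_ge0.
by rewrite sub0r sqrrN.
Qed.

End Alg.

Section Alg2.
Variable R : realType.
Variable p : nat.
Lemma CLT_lin k (l : 'rV[R]_p) n (v : 'I_n -> 'rV[R]_p) c :
  c *: \sum_j v j - CLT k l (c *: \sum_j v j) = c *: \sum_j (v j - CLT k l (v j)).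
Proof.
apply/rowP => m; rewrite !mxE !summxE.
under [in RHS]eq_bigr do rewrite !mxE.
case: ifP => _; rewrite ?mxE ?summxE.
  rewrite subrr; under eq_bigr do rewrite subrr.
  by rewrite big1 ?mulr0.
by rewrite subr0; under eq_bigr do rewrite subr0.
Qed.
End Alg2.

Lemma alg1 (R : realType) (N G S kappa : R) : 0 < N -> 0 < 1 + kappa * N * (N - 1) ->
  N * G / (1 + kappa * N * (N - 1)) * (N ^- 2 * (N * N * kappa * S + N * (1 - kappa) * S))
  - N^-1 * (G * S) = G * S * (N - 1) / (N * (1 + kappa * N * (N - 1))).
Proof.
move=> N0 D0; field.
by rewrite (negbT (gt_eqF N0)) (negbT (gt_eqF D0)).
Qed.

Section Meas.
Variable R : realType.
Variable d : measure_display.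
Variable T : measurableType d.
Variable mu : measure T R.
Variable p : nat.

Definition rowmeas (v : T -> 'rV[R]_p) :=
  forall m, measurable_fun setT (fun w => v w 0 m).

Lemma meas_sqnorm v : rowmeas v -> measurable_fun setT (fun w => sqnorm (v w)).
Proof. by move=> mv; rewrite /sqnorm; apply: measurable_sum => m; apply: measurable_funX. Qed.

Lemma meas_dotv u v : rowmeas u -> rowmeas v ->
  measurable_fun setT (fun w => dotv (u w) (v w)).
Proof. by move=> mu' mv; rewrite /dotv; apply: measurable_sum => m; apply: measurable_funM. Qed.

Lemma rowmeasB u v : rowmeas u -> rowmeas v -> rowmeas (fun w => u w - v w).
Proof.
move=> mu' mv m; rewrite (_ : (fun w => _) = (fun w => u w 0 m) \- (fun w => v w 0 m)).
  exact: measurable_funB.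
by apply: funext => w; rewrite !mxE.
Qed.

Lemma rowmeasZ c v : rowmeas v -> rowmeas (fun w => c *: v w).
Proof.
move=> mv m; rewrite (_ : (fun w => _) = (fun w => c * v w 0 m)).
  exact: measurableT_comp.
by apply: funext => w; rewrite !mxE.
Qed.

Lemma rowmeas_sum n (v : 'I_n -> T -> 'rV[R]_p) : (forall j, rowmeas (v j)) ->
  rowmeas (fun w => \sum_j v j w).
Proof.
move=> mv m; rewrite (_ : (fun w => _) = (fun w => \sum_j v j w 0 m)).
  by apply: measurable_sum => j; apply: mv.
by apply: funext => w; rewrite summxE.
Qed.

Lemma rowmeasCLT k l v : rowmeas l -> rowmeas v ->
  rowmeas (fun w => CLT k (l w) (v w)).
Proof.
move=> ml mv m.
have mb : forall j, measurable_fun setT (fun w => beats (l w) j m).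
  move=> j; rewrite /beats; apply: measurable_or.
    by apply: measurable_fun_ltr; apply: measurableT_comp.
  apply: measurable_and; last exact: measurable_cst.
  by apply: measurable_fun_eqr; apply: measurableT_comp.
have mc : measurable_fun setT (fun w => m \in topk k (l w)).
  rewrite (_ : (fun w => _) = (fun w => (\sum_j (if beats (l w) j m then 1 else 0) : R) < k%:R)).
    apply: measurable_fun_ltr; last exact: measurable_cst.
    apply: measurable_sum => j; apply: measurable_fun_ifT => //; exact: measurable_cst.
  apply: funext => w; rewrite /topk inE -(ltr_nat R) -sum1_card big_mkcond natr_sum /=.
  congr (_ < _); apply: eq_bigr => j _; rewrite inE; by case: ifP.
rewrite (_ : (fun w => _) = (fun w => if m \in topk k (l w) then v w 0 m else 0)).
  apply: measurable_fun_ifT => //; exact: measurable_cst.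
by apply: funext => w; rewrite !mxE.
Qed.

Definition Int (f : T -> R) := mu.-integrable setT (fun w => (f w)%:E).

Lemma RintE (f : T -> R) : Int f -> (\int[mu]_w (f w)%:E = (Rintegral mu setT f)%:E)%E.
Proof. by move=> If; rewrite /Rintegral fineK // integrable_fin_num. Qed.

Lemma Int_le (f g : T -> R) : measurable_fun setT f -> (forall w, `|f w| <= `|g w|) -> Int g -> Int f.
Proof.
move=> mf fg Ig; apply: le_integrable Ig => //.
  by apply/measurable_EFinP.
by move=> w _; rewrite !abse_EFin lee_fin.
Qed.

Lemma Int_sum I (s : seq I) (f : I -> T -> R) : (forall i, Int (f i)) ->
  Int (fun w => \sum_(i <- s) f i w).
Proof.
move=> If; rewrite /Int.
rewrite (_ : (fun w => _) = (fun w => \sum_(i <- s) (f i w)%:E)%E); last first.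
  by apply: funext => w; rewrite sumEFin.
by apply: (@integrable_sum _ _ _ mu setT measurableT _ s xpredT (fun i w => (f i w)%:E)) => i _; apply: If.
Qed.

Lemma IntZ (c : R) (f : T -> R) : Int f -> Int (fun w => c * f w).
Proof.
move=> If; rewrite /Int.
rewrite (_ : (fun w => _) = (fun w => c%:E * (f w)%:E)%E); last first.
  by apply: funext => w; rewrite EFinM.
exact: integrableZl.
Qed.

Lemma Rint_sum I (s : seq I) (f : I -> T -> R) : (forall i, Int (f i)) ->
  Rintegral mu setT (fun w => \sum_(i <- s) f i w) = \sum_(i <- s) Rintegral mu setT (f i).
Proof.
move=> If; rewrite /Rintegral.
under eq_integral do rewrite -sumEFin.
rewrite integral_sum //.
under eq_bigr do rewrite RintE //.
by rewrite sumEFin.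
Qed.

Lemma RintZ (c : R) (f : T -> R) : Int f -> Rintegral mu setT (fun w => c * f w) = c * Rintegral mu setT f.
Proof. by move=> If; rewrite RintegralZl. Qed.

Lemma Rint_le (f g : T -> R) : Int f -> Int g -> (forall w, f w <= g w) ->
  Rintegral mu setT f <= Rintegral mu setT g.
Proof. by move=> If Ig fg; apply: le_Rintegral. Qed.

Lemma Rint_ge0 (f : T -> R) : (forall w, 0 <= f w) -> 0 <= Rintegral mu setT f.
Proof. by move=> f0; apply: Rintegral_ge0. Qed.

End Meas.

Unset Implicit Arguments. Set Strict Implicit.
Theorem lemma2 (R : realType) (d : measure_display) (T : measurableType d)
  (P : probability T R) (p k n : nat) (hn : (2 <= n)%N)
  (x : 'I_n -> T -> 'rV[R]_p) (gam : 'I_n -> R) (kappa : R) :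
  (forall i m, measurable_fun setT (fun w => x i w 0 m)) ->
  (forall i, P.-integrable setT (fun w => (sqnorm (x i w))%:E)) ->
  (forall i j, (\int[P]_w (sqnorm (CLT k (x i w) (x j w) - x j w))%:E
                <= (gam j)%:E * \int[P]_w (sqnorm (x j w))%:E)%E) ->
  0 < kappa ->
  (forall i j, kappa * Num.sqrt (Rintegral P setT (fun w => sqnorm (x i w)))
                     * Num.sqrt (Rintegral P setT (fun w => sqnorm (x j w)))
               <= Rintegral P setT (fun w => dotv (x i w) (x j w))) ->
  (forall i j, (\int[P]_w (sqnorm (x i w))%:E = \int[P]_w (sqnorm (x j w))%:E)%E) ->
  (n%:R * (\sum_i gam i) - 1) / (n%:R * (n%:R - 1)) < kappa ->
  let gamma := n%:R * (\sum_i gam i) / (1 + kappa * n%:R * (n%:R - 1)) in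
  let y := fun w => n%:R^-1 *: \sum_i x i w in
  gamma < 1 /\
  forall i, (\int[P]_w (sqnorm (y w - CLT k (x i w) (y w)))%:E
             <= gamma%:E * \int[P]_w (sqnorm (y w))%:E)%E.
Proof.
move=> Hm Hint Hgam k0 Hcorr Heq Hk gamma y.
set N : R := n%:R.
have N2 : 2 <= N by rewrite /N (ler_nat R 2 n).
have N0 : 0 < N by lra.
have n0 : (0 < n)%N by apply: leq_trans hn.
set G := \sum_i gam i.
have NN1 : 0 < N * (N - 1) by apply: mulr_gt0; lra.
set D := 1 + kappa * N * (N - 1).
have D0 : 0 < D by rewrite /D -mulrA; have := mulr_gt0 k0 NN1; lra.
have gam1 : gamma < 1.
  rewrite /gamma -/N -/G -/D ltr_pdivrMr // mul1r.
  move: Hk; rewrite -/N -/G ltr_pdivrMr // /D -mulrA; lra.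
split => // i.
have mx : forall j, rowmeas (x j) by move=> j m; exact: Hm.
have my : rowmeas y by apply: rowmeasZ; apply: rowmeas_sum.
set S := Rintegral P setT (fun w => sqnorm (x i w)).
have HS : forall j, Rintegral P setT (fun w => sqnorm (x j w)) = S.
  by move=> j; move: (Heq j i); rewrite (RintE (Hint j)) (RintE (Hint i)) => -[].
have S0 : 0 <= S by apply: Rint_ge0 => w; exact: sqnorm_ge0.
pose Dj j w := sqnorm (CLT k (x i w) (x j w) - x j w).
have IntD : forall j, Int P (Dj j).
  move=> j; apply: (Int_le _ (fun w => CLT_sub_le k (x i w) (x j w)) (Hint j)).
  by apply: meas_sqnorm; apply: rowmeasB => //; apply: rowmeasCLT.
have Hg : forall j, Rintegral P setT (Dj j) <= gam j * S.
  by move=> j1; move: (Hgam i j1); rewrite (RintE (IntD j1)) (RintE (Hint j1)) -EFinM lee_fin HS.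
have Intdot : forall a b, Int P (fun w => dotv (x a w) (x b w)).
  move=> a b.
  apply: (Int_le (g := fun w => \sum_(j <- [:: a; b]) sqnorm (x j w))).
  - exact: meas_dotv.
  - by move=> w; rewrite !big_cons big_nil addr0; exact: dot_le.
  - by apply: Int_sum.
have Lpt : forall w, sqnorm (y w - CLT k (x i w) (y w)) <= \sum_j N^-1 * Dj j w.
  move=> w; rewrite /y CLT_lin; apply: le_trans (key _ n0) _.
  by apply: ler_sum => j _; rewrite /Dj -opprB sqnormN.
have IntL : Int P (fun w => sqnorm (y w - CLT k (x i w) (y w))).
  apply: (Int_le (g := fun w => \sum_j N^-1 * Dj j w)).
  - by apply: meas_sqnorm; apply: rowmeasB => //; apply: rowmeasCLT.
  - move=> w; have h1 := sqnorm_ge0 (y w - CLT k (x i w) (y w)); have h2 := Lpt w.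
    have h3 := le_trans h1 h2.
    by rewrite (ger0_norm h1) (ger0_norm h3).
  - by apply: Int_sum => j; apply: IntZ.
set Lr := Rintegral P setT (fun w => sqnorm (y w - CLT k (x i w) (y w))).
have LB : Lr <= N^-1 * (G * S).
  apply: le_trans (Rint_le IntL _ Lpt) _; first by apply: Int_sum => j; apply: IntZ.
  rewrite Rint_sum; last by move=> j; apply: IntZ.
  rewrite /G mulr_suml mulr_sumr; apply: ler_sum => j _.
  by rewrite /= (RintZ _ (IntD j)); apply: ler_wpM2l; [rewrite invr_ge0 ltW | exact: Hg].
have L0 : 0 <= Lr by apply: Rint_ge0 => w; exact: sqnorm_ge0.
have GS0 : 0 <= G * S.
  rewrite /G mulr_suml; apply: sumr_ge0 => j _; apply: le_trans (Hg j).
  by apply: Rint_ge0 => w; exact: sqnorm_ge0.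
set Yr := Rintegral P setT (fun w => sqnorm (y w)).
have Ypt : (fun w => sqnorm (y w)) =
    (fun w => \sum_a \sum_b N^-2 * dotv (x a w) (x b w)).
  apply: funext => w; rewrite /y sqnormZ sqnorm_sum mulr_sumr.
  by apply: eq_bigr => a _; rewrite mulr_sumr exprVn.
have IntY : Int P (fun w => sqnorm (y w)).
  rewrite Ypt; apply: Int_sum => a; apply: Int_sum => b; exact: IntZ.
have Ylow : N^-2 * (N * N * kappa * S + N * (1 - kappa) * S) <= Yr.
  rewrite /Yr Ypt Rint_sum; last by move=> a; apply: Int_sum => b; exact: IntZ.
  have term : forall a b : 'I_n, kappa * S + (a == b)%:R * (1 - kappa) * S
                  <= Rintegral P setT (fun w => dotv (x a w) (x b w)).
    move=> a b; case: eqP => [<-|ab].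
      rewrite mul1r (_ : (fun w => _) = (fun w => sqnorm (x a w))); last first.
        by apply: funext => w; rewrite dotvv.
      by rewrite HS; lra.
    rewrite !mul0r addr0; apply: le_trans (Hcorr a b); rewrite !HS -mulrA.
    by rewrite -expr2 sqr_sqrtr.
  have rowsum : forall a : 'I_n, \sum_(b < n) (kappa * S + (a == b)%:R * (1 - kappa) * S)
      = N * kappa * S + (1 - kappa) * S.
    move=> a; rewrite big_split /= sumr_const card_ord -/N.
    rewrite (bigD1 a) //= eqxx mul1r big1 ?addr0; last first.
      by move=> b; rewrite eq_sym => /negbTE ->; rewrite !mul0r.
    by rewrite -mulr_natl -/N mulrA.
  have -> : N * N * kappa * S + N * (1 - kappa) * S
      = \sum_(a < n) \sum_b (kappa * S + (a == b)%:R * (1 - kappa) * S).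
    under eq_bigr do rewrite rowsum.
    by rewrite sumr_const card_ord -/N -mulr_natl -/N; ring.
  rewrite mulr_sumr; apply: ler_sum => a _.
  rewrite Rint_sum; last by move=> b; exact: IntZ.
  rewrite mulr_sumr; apply: ler_sum => b _.
  rewrite /= (RintZ _ (Intdot a b)); apply: ler_wpM2l; first by rewrite invr_ge0 exprn_ge0 // ltW.
  exact: term.
have Yup : Yr <= S.
  apply: le_trans (Rint_le IntY _ (fun w => key (fun j => x j w) n0)) _.
    by apply: Int_sum => j; exact: IntZ (Hint j).
  rewrite Rint_sum; last by move=> j; exact: IntZ (Hint j).
  under eq_bigr => j _ do rewrite /= (RintZ _ (Hint j)) HS.
  by rewrite sumr_const card_ord -/N -mulr_natl -/N mulrA (mulfV (negbT (gt_eqF N0))) mul1r.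
have E1 : (\int[P]_w (sqnorm (y w - CLT k (x i w) (y w)))%:E = Lr%:E)%E := RintE IntL.
have E2 : (\int[P]_w (sqnorm (y w))%:E = Yr%:E)%E := RintE IntY.
rewrite E1 E2 -EFinM lee_fin.
have [G0|G0] := leP 0 G.
  have gam0 : 0 <= gamma by rewrite /gamma -/N -/G -/D; apply: divr_ge0; [apply: mulr_ge0; [exact: ltW | exact: G0] | exact: ltW].
  apply: le_trans LB _; apply: le_trans (ler_wpM2l gam0 Ylow).
  rewrite /gamma -/N -/G -/D -subr_ge0.
  rewrite /D alg1 // -/D.
  apply: divr_ge0; first by apply: mulr_ge0 => //; lra.
  by apply: mulr_ge0; apply: ltW.
have SS : S = 0.
  apply/eqP; rewrite eq_le S0 andbT; apply: contraLR GS0; rewrite -ltNge -ltNge => Sp.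
  by rewrite pmulr_llt0.
have Y0 : Yr = 0 by apply/eqP; rewrite eq_le -SS Yup /= SS; apply: Rint_ge0 => w; exact: sqnorm_ge0.
by rewrite Y0 mulr0; move: LB; rewrite SS mulr0 mulr0.
Qed.
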